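(* Consider the networked closed-loop system described in the context (plant with bounded additive disturbance, local nominal model with consistent actuator and ancillary controller, remote estimator and tube-based tracking MPC), and suppose the initial plant and nominal states satisfy $x(0)-x_{n}(0)\in\mathbb{Z}_K$. If at time step $k$ the consistency indicator satisfies $\Theta_k=1$, then $x(k)\in\{\hat{x}(k|k-1)\}\oplus\mathbb{Z}_K$.
   Context: Plant: $x(k+1)=Ax(k)+Bu(k)+w(k)$ with $x(k)\in\mathbb{R}^{n_x}$, $u(k)\in\mathbb{R}^{n_u}$, $(A,B)$ stabilizable, and $w(k)\in\mathbb{W}=\{w: H_w w\le h_w\}$ for all $k$, where $\mathbb{W}$ is compact and contains the origin in its interior. State and input constraint sets $\mathbb{X}=\{x:H_x x\le h_x\}$, $\mathbb{U}=\{u:H_u u\le h_u\}$ are bounded and contain the origin in their interior. The Minkowski sum is $\oplus$, the Pontryagin difference is $\ominus$, and $M\mathbb{P}=\{Mp:p\in\mathbb{P}\}$. Network: binary variables $\theta_k$ ($=1$ iff the packet $U_k$ sent by the remote controller at time $k$ is received by the plant) and $\gamma_k$ ($=1$ iff the packet $X_k$ sent by the plant at time $k$ is received by the controller). Sets: $K$ is a gain with spectral radius $\rho(A-BK)<1$, and $\mathbb{Z}_K=\bigoplus_{i=0}^\infty (A-BK)^i\mathbb{W}$. Tightened sets: $\mathbb{X}_c=\mathbb{X}\ominus\mathbb{Z}_K$, $\mathbb{U}_c=\mathbb{U}\ominus(-K)\mathbb{Z}_K$. $\bar K$ is a gain with $\rho(A-B\bar K)<1$. With $x_a=(x_n,\bar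 x,\bar u)$ and $A_a=\begin{bmatrix}A-B\bar K & B\bar K & B\\ 0& I&0\\0&0&I\end{bmatrix}$, let $X_{f,\bar K}=\{x_a: A_a^k x_a\in\mathbb{X}_{a,\bar K}\ \forall k\ge0\}$, where $\mathbb{X}_{a,\bar K}=\{x_a: x_n\in\mathbb{X}_c,\ \bar u-\bar K(x_n-\bar x)\in\mathbb{U}_c\}$, and for fixed $\lambda\in(0,1)$, $X^\lambda_{f,\bar K}=X_{f,\bar K}\cap\{(x_n,\bar x,\bar u):\bar x\in\lambda\mathbb{X}_c,\ \bar u\in\lambda\mathbb{U}_c\}$. Remote MPC at time $k$ (horizon $N$, symmetric $Q\ge0$, $R>0$, $T>0$, $P$ solving $P=(A-B\bar K)^\top P(A-B\bar K)+Q+\bar K^\top R\bar K$, reference $x_r$): minimize over $\mathbf{u}(0),\dots,\mathbf{u}(N-1),\bar x,\bar u$ the cost $\sum_{i=0}^{N-1}(\|\mathbf{x}(i)-\bar x\|_Q^2+\|\mathbf{u}(i)-\bar u\|_R^2)+\|\mathbf{x}(N)-\bar x\|_P^2+\|\bar x-x_r\|_T^2$ subject to $\mathbf{x}(i+1)=A\mathbf{x}(i)+B\mathbf{u}(i)$, $\mathbf{x}(i)\in\mathbb{X}_c$, $\mathbf{u}(i)\in\mathbb{U}_c$ for $i=0,\dots,N-1$, $\mathbf{x}(0)=\hat x(k|k-1)$, $(\mathbf{x}(N),\bar x,\bar u)\in X^\lambda_{f,\bar K}$, and $(A-I)\bar x+B\bar u=0$. With optimal solution $\mathbf{u}^*_k,\bar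 x^*_k,\bar u^*_k$, the controller sends $U_k=\{\mathbf{u}^*_k,\ \bar u^*_k+\bar K\bar x^*_k,\ q_k\}$. Local side: $\Theta_k=\prod_{i=q_k+1}^k\theta_i$ if $\theta_k=1$ and $\Theta_k=0$ otherwise (with $q_k$ taken from the packet $U_k$); $s_k=\Theta_k k+(1-\Theta_k)s_{k-1}$. Nominal input (consistent actuator): $u_n(k)=\mathbf{u}^*_{s_k}(k-s_k)$ if $k-s_k<N$, else $u_n(k)=\bar u^*_{s_k}+\bar K\bar x^*_{s_k}-\bar K x_n(k)$. Nominal model $x_n(k+1)=Ax_n(k)+Bu_n(k)$. Applied input (ancillary controller) $u(k)=u_n(k)-K(x(k)-x_n(k))$. The plant sends $X_k=\{x_n(k),s_k\}$. Remote estimator: $\hat x(k+1|k)=A\hat x(k|k)+B\hat u(k|k)$ with $\hat x(k|k)=\gamma_k x_n(k)+(1-\gamma_k)\hat x(k|k-1)$, $\hat u(k|k)=\gamma_k u_n(k)+(1-\gamma_k)\mathbf{u}^*_k(0)$ (where $u_n(k)$ is recomputed remotely by the consistent actuator rule from the received $s_k$), and $q_{k+1}=\gamma_k k+(1-\gamma_k)q_k$. *)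

(* Defs.v *)
From mathcomp Require Import all_boot all_order all_algebra.
From mathcomp Require Import all_classical all_reals all_analysis.
From mathcomp Require Import complex.
Set Implicit Arguments. Unset Strict Implicit. Unset Printing Implicit Defensive.
Import Order.TTheory GRing.Theory Num.Theory.
Import numFieldNormedType.Exports.
Local Open Scope ring_scope.
Local Open Scope classical_set_scope.

Section Sets.
Variable R : realType.

Definition polyset (n p : nat) (H : 'M[R]_(p, n)) (h : 'cV[R]_p) : 'cV[R]_n -> Prop :=
  fun x => forall i : 'I_p, (H *m x) i ord0 <= h i ord0.

Definition sing (n : nat) (x : 'cV[R]_n) : 'cV[R]_n -> Prop := fun z => z = x.

Definition minkowski_sum (n : nat) (S T : 'cV[R]_n -> Prop) : 'cV[R]_n -> Prop :=
  fun z => exists x y, S x /\ T y /\ z = x + y.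

Definition pdiff (n : nat) (S T : 'cV[R]_n -> Prop) : 'cV[R]_n -> Prop :=
  fun z => forall y, T y -> S (z + y).

Definition limage (m n : nat) (M : 'M[R]_(m, n)) (P : 'cV[R]_n -> Prop) : 'cV[R]_m -> Prop :=
  fun z => exists p, P p /\ z = M *m p.

Definition sscale (n : nat) (l : R) (P : 'cV[R]_n -> Prop) : 'cV[R]_n -> Prop :=
  fun z => exists p, P p /\ z = l *: p.

Definition bounded_vset (n : nat) (S : 'cV[R]_n -> Prop) : Prop :=
  exists M : R, forall x, S x -> forall i, `|x i ord0| <= M.

Definition closed_vset (n : nat) (S : 'cV[R]_n -> Prop) : Prop :=
  forall (xs : nat -> 'cV[R]_n) (x : 'cV[R]_n),
    (forall k, S (xs k)) ->
    (forall i, (fun k => xs k i ord0) @ \oo --> x i ord0) -> S x.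

Definition compact_vset (n : nat) (S : 'cV[R]_n -> Prop) : Prop :=
  bounded_vset S /\ closed_vset S.

Definition origin_in_interior (n : nat) (S : 'cV[R]_n -> Prop) : Prop :=
  exists e : R, 0 < e /\ forall x : 'cV[R]_n, (forall i, `|x i ord0| < e) -> S x.

(* infinite Minkowski sum  \bigoplus_{i>=0} M^i W : the set of all sums of
   convergent series  sum_i M^i w_i  with every w_i in W *)
Definition inf_msum (n : nat) (M : 'M[R]_n) (W : 'cV[R]_n -> Prop) : 'cV[R]_n -> Prop :=
  fun z => exists w : nat -> 'cV[R]_n, (forall i, W (w i)) /\
    forall r : 'I_n, (fun N => (\sum_(i < N) (M ^+ i *m w i)) r ord0) @ \oo --> z r ord0.

Definition spectral_radius_lt1 (n : nat) (M : 'M[R]_n) : Prop :=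
  forall l : R[i], root (char_poly (map_mx (fun r : R => (r%:C)%C) M)) l -> `|l| < 1.

Definition stabilizable (nx nu : nat) (A : 'M[R]_nx) (B : 'M[R]_(nx, nu)) : Prop :=
  exists K : 'M[R]_(nu, nx), spectral_radius_lt1 (A - B *m K).

Definition qnorm (n : nat) (Q : 'M[R]_n) (v : 'cV[R]_n) : R := (v^T *m Q *m v) ord0 ord0.

Definition psd (n : nat) (Q : 'M[R]_n) : Prop := Q^T = Q /\ forall v, 0 <= qnorm Q v.
Definition pd (n : nat) (Q : 'M[R]_n) : Prop := Q^T = Q /\ forall v, v != 0 -> 0 < qnorm Q v.

End Sets.

Section MPC.
Variables (R : realType) (nx nu : nat).
Variables (A : 'M[R]_nx) (B : 'M[R]_(nx, nu)).

Definition ZK (K : 'M[R]_(nu, nx)) (W : 'cV[R]_nx -> Prop) : 'cV[R]_nx -> Prop :=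
  inf_msum (A - B *m K) W.

Definition Xc K W (X : 'cV[R]_nx -> Prop) : 'cV[R]_nx -> Prop := pdiff X (ZK K W).
Definition Uc K W (U : 'cV[R]_nu -> Prop) : 'cV[R]_nu -> Prop :=
  pdiff U (limage (- K) (ZK K W)).

Definition aug (xn xb : 'cV[R]_nx) (ub : 'cV[R]_nu) : 'cV[R]_(nx + nx + nu) :=
  col_mx (col_mx xn xb) ub.
Definition aug_xn (xa : 'cV[R]_(nx + nx + nu)) : 'cV[R]_nx := usubmx (usubmx xa).
Definition aug_xb (xa : 'cV[R]_(nx + nx + nu)) : 'cV[R]_nx := dsubmx (usubmx xa).
Definition aug_ub (xa : 'cV[R]_(nx + nx + nu)) : 'cV[R]_nu := dsubmx xa.

Definition Aa (Kb : 'M[R]_(nu, nx)) : 'M[R]_(nx + nx + nu) :=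
  block_mx (block_mx (A - B *m Kb) (B *m Kb) 0 1%:M) (col_mx B 0) 0 1%:M.

Definition Xa Kb (Xc' : 'cV[R]_nx -> Prop) (Uc' : 'cV[R]_nu -> Prop)
  (xa : 'cV[R]_(nx + nx + nu)) : Prop :=
  Xc' (aug_xn xa) /\ Uc' (aug_ub xa - Kb *m (aug_xn xa - aug_xb xa)).

Definition Xf Kb Xc' Uc' (xa : 'cV[R]_(nx + nx + nu)) : Prop :=
  forall k : nat, Xa Kb Xc' Uc' (Aa Kb ^+ k *m xa).

Definition Xf_lambda Kb Xc' Uc' (lam : R) (xa : 'cV[R]_(nx + nx + nu)) : Prop :=
  Xf Kb Xc' Uc' xa /\ sscale lam Xc' (aug_xb xa) /\ sscale lam Uc' (aug_ub xa).

Fixpoint pred_state (x0 : 'cV[R]_nx) (u : nat -> 'cV[R]_nu) (i : nat) : 'cV[R]_nx :=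
  match i with
  | 0 => x0
  | i'.+1 => A *m pred_state x0 u i' + B *m u i'
  end.

Definition mpc_feasible Kb Xc' Uc' (lam : R) (N : nat) (x0 : 'cV[R]_nx)
  (u : nat -> 'cV[R]_nu) (xb : 'cV[R]_nx) (ub : 'cV[R]_nu) : Prop :=
  (forall i, (i < N)%N -> Xc' (pred_state x0 u i) /\ Uc' (u i)) /\
  Xf_lambda Kb Xc' Uc' lam (aug (pred_state x0 u N) xb ub) /\
  (A - 1%:M) *m xb + B *m ub = 0.

Definition mpc_cost (Q : 'M[R]_nx) (Rw : 'M[R]_nu) (P T : 'M[R]_nx) (xr : 'cV[R]_nx)
  (N : nat) (x0 : 'cV[R]_nx) (u : nat -> 'cV[R]_nu) (xb : 'cV[R]_nx) (ub : 'cV[R]_nu) : R :=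
  \sum_(i < N) (qnorm Q (pred_state x0 u i - xb) + qnorm Rw (u i - ub))
  + qnorm P (pred_state x0 u N - xb) + qnorm T (xb - xr).

Definition mpc_optimal Kb Xc' Uc' lam Q Rw P T xr N x0 u xb ub : Prop :=
  mpc_feasible Kb Xc' Uc' lam N x0 u xb ub /\
  forall u' xb' ub', mpc_feasible Kb Xc' Uc' lam N x0 u' xb' ub' ->
    mpc_cost Q Rw P T xr N x0 u xb ub <= mpc_cost Q Rw P T xr N x0 u' xb' ub'.

End MPC.

(* q_k : q_0 = -1 (no measurement received yet), q_{k+1} = gamma_k k + (1-gamma_k) q_k *)
Fixpoint qseq (gamma : nat -> bool) (k : nat) : int :=
  match k with
  | 0 => (-1)%R
  | k'.+1 => if gamma k' then (k' : int) else qseq gamma k'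
  end.

(* Theta_k = prod_{i = q_k+1}^{k} theta_i  if theta_k = 1, and 0 otherwise *)
Definition Theta (theta gamma : nat -> bool) (k : nat) : bool :=
  theta k && [forall i : 'I_k.+1, ((qseq gamma k < (i : nat)%:Z)%R) ==> theta i].

(* s_k = Theta_k k + (1 - Theta_k) s_{k-1}, with initial value s_{-1} = s_init *)
Fixpoint sseq (theta gamma : nat -> bool) (s_init : nat) (k : nat) : nat :=
  match k with
  | 0 => if Theta theta gamma 0 then 0%N else s_init
  | k'.+1 => if Theta theta gamma k then k else sseq theta gamma s_init k'
  end.

Definition un_rule (R : realType) (nx nu : nat) (N : nat) (Kb : 'M[R]_(nu, nx))
  (uplan : nat -> nat -> 'cV[R]_nu) (xbopt : nat -> 'cV[R]_nx) (ubopt : nat -> 'cV[R]_nu)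
  (k sk : nat) (xnk : 'cV[R]_nx) : 'cV[R]_nu :=
  if (k - sk < N)%N then uplan sk (k - sk)%N
  else ubopt sk + Kb *m xbopt sk - Kb *m xnk.

(* Main.v *)
Require Import Defs.
From mathcomp Require Import all_boot all_order all_algebra.
From mathcomp Require Import all_classical all_reals all_analysis.
Import Order.TTheory GRing.Theory Num.Theory.
Local Open Scope ring_scope.
Import numFieldNormedType.Exports.
Local Open Scope classical_set_scope.


Lemma cvg_bigsum (R : realType) (I : Type) (r : seq I) (f : I -> nat -> R) (l : I -> R) :
  (forall i, f i @ \oo --> l i) ->
  (fun N => \sum_(i <- r) f i N) @ \oo --> \sum_(i <- r) l i.
Proof.
elim: r => [|a r IH] H.
  under eq_fun do rewrite big_nil. rewrite big_nil; exact: cvg_cst.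
under eq_fun do rewrite big_cons. rewrite big_cons.
apply: cvgD; [exact: H|exact: IH].
Qed.

Lemma inf_msum_step (R : realType) (n : nat) (M : 'M[R]_n) (W : 'cV[R]_n -> Prop) z w0 :
  inf_msum M W z -> W w0 -> inf_msum M W (M *m z + w0).
Proof.
move=> [w [Hw Hc]] Hw0.
pose w' := fun i : nat => if i is i'.+1 then w i' else w0.
exists w'; split.
  by case.
move=> r.
rewrite -cvg_shiftS.
have E : forall N, (\sum_(i < N.+1) (M ^+ i *m w' i)) r ord0
   = \sum_(j < n) M r j * (\sum_(i < N) (M ^+ i *m w i)) j ord0 + w0 r ord0.
  move=> N; rewrite big_ord_recl /= expr0 mul1mx.
  have -> : \sum_(i < N) M ^+ (bump 0 i) *m w i = M *m \sum_(i < N) (M ^+ i *m w i).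
    rewrite mulmx_sumr; apply: eq_bigr => i _.
    rewrite /bump /= add1n exprS mulmxA; congr (_ *m _); by rewrite mulmxE.
  by rewrite mxE addrC mxE.
rewrite (_ : (M *m z + w0) r ord0 = \sum_(j < n) M r j * z j ord0 + w0 r ord0); last by rewrite !mxE.
rewrite (_ : (fun N => _) = (fun N => \sum_(j < n) M r j * (\sum_(i < N) M ^+ i *m w i) j ord0 + w0 r ord0)); last by apply/funext => N; exact: E.
apply: cvgD; last exact: cvg_cst.
rewrite -[X in _ --> X]big_enum /=.
under eq_fun do rewrite -big_enum /=.
apply: cvg_bigsum => j.
apply: cvgMl_tmp. exact: Hc.
Qed.

Lemma qseq_lt (gamma : nat -> bool) j : qseq gamma j < (j : int).
Proof.
elim: j => [|j IH] //=.
case: (gamma j).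
  by rewrite ltz_nat.
apply: (lt_trans IH); by rewrite ltz_nat.
Qed.

Lemma Theta_pred theta gamma j :
  ~~ gamma j -> Theta theta gamma j.+1 -> Theta theta gamma j.
Proof.
move=> gj /andP [_ /forallP H].
have Hq : qseq gamma j.+1 = qseq gamma j by rewrite /= (negbTE gj).
apply/andP; split.
  have := H (@Ordinal j.+2 j (leqW (ltnSn j))) => /implyP; apply.
  by rewrite Hq qseq_lt.
apply/forallP => i; apply/implyP => Hi.
have := H (widen_ord (leqnSn _) i) => /implyP; apply.
by rewrite Hq.
Qed.

Lemma sseq_Theta theta gamma s j : Theta theta gamma j -> sseq theta gamma s j = j.
Proof. by case: j => [|j] /= ->. Qed.
Lemma zid (V : zmodType) (a b c d e f : V) :
  a + (c - (d - e)) + f - (b + c) = a - d - (b - e) + f.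
Proof.
rewrite !opprD !opprK.
rewrite (addrC (-b)) (addrC c) -!addrA; congr (a + _).
congr (- d + _).
by rewrite (addrC (-c)) (addrCA f) (addrCA c) (addrC f (-c)) addNKr addrCA.
Qed.

Theorem proposition1 (R : realType) (nx nu pw px pu : nat)
  (A : 'M[R]_nx) (B : 'M[R]_(nx, nu))
  (Hw : 'M[R]_(pw, nx)) (hw : 'cV[R]_pw)
  (Hx : 'M[R]_(px, nx)) (hx : 'cV[R]_px)
  (Hu : 'M[R]_(pu, nu)) (hu : 'cV[R]_pu)
  (K Kb : 'M[R]_(nu, nx))
  (N : nat) (Q : 'M[R]_nx) (Rw : 'M[R]_nu) (T P : 'M[R]_nx) (lam : R)
  (xr : 'cV[R]_nx)
  (theta gamma : nat -> bool) (s_init : nat)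
  (x xn : nat -> 'cV[R]_nx) (u un : nat -> 'cV[R]_nu) (w : nat -> 'cV[R]_nx)
  (xhat : nat -> 'cV[R]_nx)
  (uplan : nat -> nat -> 'cV[R]_nu) (xbopt : nat -> 'cV[R]_nx) (ubopt : nat -> 'cV[R]_nu)
  (k : nat) :
  (* standing assumptions *)
  stabilizable A B ->
  compact_vset (polyset Hw hw) -> origin_in_interior (polyset Hw hw) ->
  bounded_vset (polyset Hx hx) -> origin_in_interior (polyset Hx hx) ->
  bounded_vset (polyset Hu hu) -> origin_in_interior (polyset Hu hu) ->
  spectral_radius_lt1 (A - B *m K) ->
  spectral_radius_lt1 (A - B *m Kb) ->
  (0 < lam < 1) ->
  (0 < N)%N ->
  psd Q -> pd Rw -> pd T ->
  P = (A - B *m Kb)^T *m P *m (A - B *m Kb) + Q + Kb^T *m Rw *m Kb ->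
  (* plant with bounded disturbance *)
  (forall j, polyset Hw hw (w j)) ->
  (forall j, x j.+1 = A *m x j + B *m u j + w j) ->
  (* remote MPC: at each time j the controller solves the MPC problem
     from xhat(j|j-1) and sends (uplan j, ubopt j + Kb xbopt j, q_j) *)
  (forall j, mpc_optimal A B Kb
               (Xc A B K (polyset Hw hw) (polyset Hx hx))
               (Uc A B K (polyset Hw hw) (polyset Hu hu))
               lam Q Rw P T xr N (xhat j) (uplan j) (xbopt j) (ubopt j)) ->
  (* local side: consistent actuator, nominal model, ancillary controller *)
  (forall j, un j = un_rule N Kb uplan xbopt ubopt j (sseq theta gamma s_init j) (xn j)) ->
  (forall j, xn j.+1 = A *m xn j + B *m un j) ->
  (forall j, u j = un j - K *m (x j - xn j)) ->
  (* remote estimator: xhat j = xhat(j|j-1), initialised with xhat(0|-1) = x_n(0) *)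
  xhat 0%N = xn 0%N ->
  (forall j, xhat j.+1 =
     A *m (if gamma j then xn j else xhat j)
     + B *m (if gamma j then un_rule N Kb uplan xbopt ubopt j (sseq theta gamma s_init j) (xn j)
             else uplan j 0%N)) ->
  (* initial condition *)
  ZK A B K (polyset Hw hw) (x 0%N - xn 0%N) ->
  (* claim *)
  Theta theta gamma k ->
  minkowski_sum (sing (xhat k)) (ZK A B K (polyset Hw hw)) (x k).
Proof.
move=> _ _ _ _ _ _ _ _ _ _ HN _ _ _ _ Hwd Hxd _ Hun Hxn Hud Hh0 Hh Hz0 HT.
have Herr : forall j, ZK A B K (polyset Hw hw) (x j - xn j).
  elim=> [|j IH] //.
  have -> : x j.+1 - xn j.+1 = (A - B *m K) *m (x j - xn j) + w j.
    rewrite Hxd Hxn Hud !mulmxBr !mulmxBl !mulmxA.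
    move: (A *m x j) (A *m xn j) (B *m un j) (B *m K *m x j) (B *m K *m xn j) (w j) => a b c d e f.
    exact: zid.
  exact: inf_msum_step.
have Hhat : forall j, Theta theta gamma j -> xhat j = xn j.
  elim=> [|j IH] HTj; first by [].
  rewrite Hh Hxn.
  case Hg: (gamma j); first by rewrite Hun.
  have HTj' := Theta_pred _ _ _ (negbT Hg) HTj.
  rewrite (IH HTj') Hun /un_rule (sseq_Theta _ _ s_init _ HTj') subnn HN.
  by [].
exists (xhat k), (x k - xhat k); split; first by [].
split; last by rewrite addrC subrK.
by rewrite Hhat.
Qed.
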